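(* Let $G$ be a finite group and let $H$ be a generalized quaternion $2$-subgroup of $G$. Then $H$ is a perfect code of $G$ if and only if $H$ is a maximal generalized quaternion subgroup of $G$ (i.e., maximal with respect to inclusion among the generalized quaternion subgroups of $G$).
   Context: For a group $G$ with identity $e$ and an inverse-closed subset $S\subseteq G\setminus\{e\}$, the Cayley graph $\mathrm{Cay}(G,S)$ has vertex set $G$ and edges $\{g,sg\}$ for $s\in S$, $g\in G$. A perfect code in a graph is an independent set $C$ of vertices such that every vertex outside $C$ is adjacent to exactly one vertex of $C$. A subgroup $H$ of $G$ is a perfect code of $G$ if some Cayley graph of $G$ admits $H$ as a perfect code. *)

(* Defs.v *)
From HB Require Import structures.
From mathcomp Require Import all_boot all_fingroup all_solvable.
Set Implicit Arguments. Unset Strict Implicit. Unset Printing Implicit Defensive.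
Local Open Scope group_scope.

(* Cayley graph Cay(G,S) on vertex set G: g and s*g are adjacent for s in S,
   i.e. g ~ h iff h * g^-1 \in S. *)
Definition cayley_adj (gT : finGroupType) (S : {set gT}) (g h : gT) : bool :=
  h * g^-1 \in S.

Definition perfect_code_in (gT : finGroupType) (G : {set gT}) (S C : {set gT}) : Prop :=
  [/\ C \subset G,
      (forall c1 c2, c1 \in C -> c2 \in C -> c1 != c2 -> ~~ cayley_adj S c1 c2)
    & (forall g, g \in G -> g \notin C ->
         #|[set c in C | cayley_adj S g c]| = 1%N)].

Definition subgroup_perfect_code (gT : finGroupType) (G H : {set gT}) : Prop :=
  exists S : {set gT}, [/\ S \subset G :\ 1, S^-1 = S & perfect_code_in G S H].

Definition gen_quaternion (gT : finGroupType) (H : {set gT}) : Prop :=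
  exists2 n, (2 < n)%N & H \isog 'Q_(2 ^ n).

Definition max_gen_quaternion (gT : finGroupType) (G H : {group gT}) : Prop :=
  [/\ H \subset G, gen_quaternion H &
      forall K : {group gT}, K \subset G -> gen_quaternion K -> H \subset K -> K = H].

(* Main.v *)
Require Import Defs.
From mathcomp Require Import all_boot all_fingroup all_solvable zify.
Set Implicit Arguments. Unset Strict Implicit. Unset Printing Implicit Defensive.
Local Open Scope group_scope.

Lemma GQ_facts (gT : finGroupType) (H : {group gT}) : gen_quaternion H ->
  [/\ 2.-group H, H :!=: 1, #|'Ohm_1(H)| = 2%N & ~~ cyclic H].
Proof.
case=> n n2 iso.
have cls: extremal_class H = Quaternion by apply/quaternion_classP; exists n.
have oH : #|H| = (2 ^ n)%N by rewrite (card_isog iso) card_quaternion.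
have pH : 2.-group H by rewrite /pgroup oH pnatX.
have ntH : H :!=: 1.
  rewrite -cardG_gt1 oH.
  by rewrite (leq_trans _ (leq_pexp2l (isT : 0 < 2)%N (ltnW (ltnW n2)))).
split => //.
  by apply/(prime_Ohm1P pH ntH); rewrite cls eqxx orbT.
apply/negP => cH.
have [[x y] genH _] := generators_quaternion n2 iso.
have [_ _ [_ oZ _ _ _] _ _] := quaternion_structure n2 genH iso.
move: oZ; rewrite (center_idP (cyclic_abelian cH)) oH => e.
have : (2 ^ 3 <= 2 ^ n)%N by rewrite leq_exp2l.
by rewrite e.
Qed.

Lemma even_invclosed (gT : finGroupType) (A : {set gT}) :
  A^-1 = A -> {in A, forall a, a^-1 != a} -> ~~ odd #|A|.
Proof.
move=> AV Afix; have [n ltA] := ubnP #|A|; elim: n A ltA AV Afix => // n IH A ltA AV Afix.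
have [A0 | [a Aa]] := set_0Vmem A; first by rewrite A0 cards0.
set B := A :\: [set a; a^-1].
have Aai : a^-1 \in A by rewrite -{1}AV inE invgK.
have sub2 : [set a; a^-1] \subset A by rewrite subUset !sub1set Aa Aai.
have c2 : #|[set a; a^-1]| = 2%N by rewrite cards2 eq_sym Afix.
have cA : #|A| = (#|B| + 2)%N.
  by rewrite /B cardsD (setIidPr sub2) c2 subnK // -c2 subset_leq_card.
have BV : B^-1 = B.
  apply/setP => x; rewrite /B !inE -{1}AV !inE invgK.
  rewrite !(inv_eq invgK) invgK; congr (~~ _ && _); exact: orbC.
have ltB : #|B| < n by move: ltA; rewrite cA; lia.
have := IH B ltB BV (fun x xB => Afix x (setDP xB).1).
by rewrite cA addn2 /= negbK.
Qed.

Lemma pc_maximal (gT : finGroupType) (G H K : {group gT}) (S : {set gT}) :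
  S \subset G :\ 1 -> S^-1 = S -> perfect_code_in G S H ->
  H \subset K -> K \subset G -> gen_quaternion H -> gen_quaternion K -> K = H.
Proof.
move=> sS SV [sHG indep cnt] sHK sKG gqH gqK.
have [pK ntK oK1 _] := GQ_facts gqK.
have [pH ntH oH1 _] := GQ_facts gqH.
have eO : 'Ohm_1(H) = 'Ohm_1(K).
  by apply/eqP; rewrite eqEcard OhmS // oH1 oK1 leqnn.
have invH : forall t, t \in K -> t ^+ 2 = 1 -> t \in H.
  move=> t Kt t2; apply: (subsetP (Ohm_sub 1 H)); rewrite eO (OhmE 1 pK).
  by rewrite mem_gen // !inE Kt /= expn1 t2.
have SnH : forall s, s \in S -> s \notin H.
  move=> s Ss; apply/negP => Hs.
  have s1 : s != 1 by have := subsetP sS s Ss; rewrite !inE => /andP [].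
  have := indep 1 s (group1 H) Hs; rewrite eq_sym s1 /cayley_adj invg1 mulg1 Ss.
  by move=> /(_ isT).
have SG : forall s, s \in S -> s \in G.
  by move=> s Ss; have := subsetP sS s Ss; rewrite !inE => /andP [].
apply: group_inj; apply/eqP; rewrite eqEsubset sHK andbT; apply: contraT => nKH.
set A := S :&: K.
have AV : A^-1 = A by rewrite /A invIg SV invGid.
have Afix : {in A, forall a, a^-1 != a}.
  move=> a /setIP [Sa Ka]; apply/negP => /eqP ea.
  have : a \in H by apply: invH => //; rewrite expgS expg1 -{1}ea mulVg.
  by rewrite (negPf (SnH a Sa)).
have evA := even_invclosed AV Afix.
have uniq1 : forall s h, s \in S -> h \in H -> h * s \in S -> h = 1.
  move=> s h Ss Hh Shs.
  have := cnt s^-1 (groupVr (SG s Ss)) _.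
  rewrite groupV (SnH s Ss) => /(_ isT) /eqP /cards1P [c ec].
  have : h \in [set c0 in H | cayley_adj S s^-1 c0].
    by rewrite inE Hh /cayley_adj invgK.
  have : 1 \in [set c0 in H | cayley_adj S s^-1 c0].
    by rewrite inE group1 /cayley_adj invgK mul1g.
  by rewrite ec !inE => /eqP <- /eqP.
have injf : {in A &, injective (fun s => H :* s)}.
  move=> s s' /setIP [Ss _] /setIP [Ss' _] e.
  have : s' \in H :* s by rewrite e rcoset_refl.
  rewrite mem_rcoset => Hss.
  have := uniq1 s (s' * s^-1) Ss Hss; rewrite mulgKV => /(_ Ss') /eqP.
  by rewrite mulg_eq1 => /eqP ->; rewrite invgK.
have im : [set H :* s | s in A] = rcosets H K :\ (gval H).
  apply/setP => C; apply/imsetP/setD1P.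
    case=> s /setIP [Ss Ks] ->; split; last by apply/rcosetsP; exists s.
    apply/negP => /eqP e.
    have : s \in H by rewrite -e rcoset_refl.
    by rewrite (negPf (SnH s Ss)).
  case=> nCH /rcosetsP [k Kk eC].
  have nHk : k \notin H by apply: contra nCH => Hk; rewrite eC rcoset_id.
  have := cnt k^-1 (groupVr (subsetP sKG k Kk)); rewrite groupV => /(_ nHk).
  move/eqP/cards1P => [c ec].
  have : c \in [set c0 in H | cayley_adj S k^-1 c0] by rewrite ec set11.
  rewrite inE /cayley_adj invgK => /andP [Hc Sck].
  exists (c * k); first by rewrite inE Sck groupM // (subsetP sHK).
  by rewrite eC; apply/rcoset_eqP; rewrite mem_rcoset invMg mulKVg groupV.
have cA : #|A| = (#|K : H| - 1)%N.
  rewrite -(card_in_imset injf) im.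
  have := cardsD1 (gval H) (rcosets H K).
  have -> : (gval H) \in rcosets H K by apply/rcosetsP; exists 1; rewrite ?rcoset1.
  rewrite /indexg => ->; rewrite addKn //.
have pi : 2.-nat #|K : H| := pnat_dvd (dvdn_indexg K H) pK.
have gt1 : (1 < #|K : H|)%N by rewrite indexg_gt1.
move: evA; rewrite cA; have [k ek] := p_natP pi; rewrite ek in gt1 *.
case: k ek gt1 => [|k] _; first by [].
by rewrite expnS mul2n; case: (2 ^ k)%N => [|j] //=; rewrite odd_double.
Qed.

Section DC.
Variables (gT : finGroupType) (H : {group gT}).

Definition dc (g : gT) : {set gT} :=
  [set y | [exists h1 in H, exists h2 in H, y == h1 * g * h2]].

Lemma dcP g y : reflect (exists h1, exists2 h2, h1 \in H /\ h2 \in H & y = h1 * g * h2)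
  (y \in dc g).
Proof.
rewrite inE; apply: (iffP idP).
  by case/exists_inP => h1 H1 /exists_inP [h2 H2 /eqP e]; exists h1, h2.
case=> h1 [h2 [H1 H2] e]; apply/exists_inP; exists h1 => //.
by apply/exists_inP; exists h2 => //; rewrite e.
Qed.

Lemma dc_refl g : g \in dc g.
Proof. by apply/dcP; exists 1, 1; rewrite ?group1 ?mul1g ?mulg1. Qed.

Lemma dc_sym g y : y \in dc g -> g \in dc y.
Proof.
case/dcP=> h1 [h2 [H1 H2] ->]; apply/dcP; exists h1^-1, h2^-1; rewrite ?groupV //.
by rewrite !mulgA mulVg mul1g mulgK.
Qed.

Lemma dc_trans g y z : y \in dc g -> z \in dc y -> z \in dc g.
Proof.
case/dcP=> h1 [h2 [H1 H2] ->]; case/dcP=> k1 [k2 [K1 K2] ->].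
apply/dcP; exists (k1 * h1), (h2 * k2); rewrite ?groupM //.
by rewrite !mulgA.
Qed.

Lemma dc_eq g y : y \in dc g -> dc y = dc g.
Proof.
move=> yg; apply/setP => z; apply/idP/idP; first exact: dc_trans.
by move=> zg; apply: dc_trans (dc_sym yg) zg.
Qed.

Lemma dc_inv g y : (y^-1 \in dc g^-1) = (y \in dc g).
Proof.
apply/idP/idP.
  case/dcP=> h1 [h2 [H1 H2] e]; apply/dcP; exists h2^-1, h1^-1; rewrite ?groupV //.
  by rewrite -(invgK y) e !invMg !invgK mulgA.
case/dcP=> h1 [h2 [H1 H2] ->]; apply/dcP; exists h2^-1, h1^-1; rewrite ?groupV //.
by rewrite !invMg mulgA.
Qed.

Lemma dc_rc g y z : z \in H :* y -> (z \in dc g) = (y \in dc g).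
Proof.
case/rcosetP=> h Hh ->.
have e1 : h * y \in dc y by apply/dcP; exists h, 1; rewrite ?group1 ?mulg1.
apply/idP/idP => [zg|yg]; last exact: dc_trans yg e1.
exact: dc_trans zg (dc_sym e1).
Qed.

Lemma dc_selfinv g x : g^-1 \in dc g -> x \in dc g -> x^-1 \in dc g.
Proof. by move=> gi xg; rewrite -(dc_eq gi) dc_inv. Qed.

Lemma card_rc_dc g s : #|H :* s :&: dc g| = ((s \in dc g) * #|H|)%N.
Proof.
case sg: (s \in dc g).
  rewrite mul1n (setIidPl _) ?card_rcoset //.
  by apply/subsetP => z zs; rewrite (dc_rc _ zs).
rewrite mul0n; apply/eqP; rewrite cards_eq0; apply/eqP/setP => z.
rewrite in_set0 in_setI; apply/andP => -[zs]; by rewrite (dc_rc _ zs) sg.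
Qed.

Lemma rc_disj y a z : z \in H :* y -> z \in H :* a -> y \in H :* a.
Proof.
move=> /rcoset_eqP e1 /rcoset_eqP e2; apply/rcoset_eqP.
by rewrite -e1 e2.
Qed.

Lemma dvd_closed (A : {set gT}) : {in A, forall y, H :* y \subset A} -> #|H| %| #|A|.
Proof.
move=> cA; have [n ltA] := ubnP #|A|; elim: n A ltA cA => // n IH A ltA cA.
have [A0 | [a Aa]] := set_0Vmem A; first by rewrite A0 cards0 dvdn0.
set B := A :\: H :* a.
have sub : H :* a \subset A := cA a Aa.
have cAB : #|A| = (#|B| + #|H|)%N.
  by rewrite /B cardsD (setIidPr sub) card_rcoset subnK // -(card_rcoset H a) subset_leq_card.
have ltB : #|B| < n.
  by move: ltA; rewrite cAB; have := cardG_gt0 H; lia.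
rewrite cAB dvdn_addl // IH //.
move=> y /setDP [Ay nya]; apply/subsetP => z zy; rewrite inE (subsetP (cA y Ay)) //.
by rewrite andbT; apply: contra nya => za; exact: rc_disj zy za.
Qed.


Lemma rc_sym a b : a \in H :* b -> b \in H :* a.
Proof. by move=> ab; apply: rc_disj ab (rcoset_refl H a). Qed.

Definition Inv (Y : {set gT}) := [/\ {in Y, forall y, H :* y \subset Y},
   forall g, #|Y :&: dc g| = #|Y :&: dc g^-1| &
   forall g, g^-1 \in dc g -> (2 * #|H| %| #|Y :&: dc g|) \/
                               exists2 t, t \in Y :&: dc g & t^-1 = t].

Definition X s := H :* s :|: H :* s^-1.

Lemma cardX_same g s : s^-1 \in H :* s -> #|X s :&: dc g| = ((s \in dc g) * #|H|)%N.
Proof. by move=> /rcoset_eqP e; rewrite /X e setUid card_rc_dc. Qed.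

Lemma cardX_diff g s : s^-1 \notin H :* s ->
  #|X s :&: dc g| = ((s \in dc g) * #|H| + (s^-1 \in dc g) * #|H|)%N.
Proof.
move=> ns; rewrite /X setIUl cardsU !card_rc_dc.
suff -> : (H :* s :&: dc g) :&: (H :* s^-1 :&: dc g) = set0 by rewrite cards0 subn0.
apply/setP => z; rewrite in_set0; apply/negP => /setIP [/setIP [zs _] /setIP [zs' _]].
by move: ns; rewrite (rc_disj zs' zs).
Qed.

Lemma cYE (Y E : {set gT}) x : X x \subset Y ->
  #|(Y :\: X x) :&: E| = (#|Y :&: E| - #|X x :&: E|)%N.
Proof.
move=> sXY; rewrite setIDAC cardsD; congr (_ - #|_|)%N.
by rewrite setIAC (setIidPr sXY) setIC.
Qed.

Lemma Inv_remove (Y : {set gT}) s : Inv Y -> s \in Y -> s^-1 \in Y ->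
  (s^-1 \in H :* s -> s^-1 = s) ->
  (forall g, g^-1 \in dc g -> s \in dc g ->
      2 * #|H| %| #|Y :&: dc g| - #|X s :&: dc g|) ->
  Inv (Y :\: X s).
Proof.
move=> [cY eY dY] Ys Ysi same prem.
have sXY : X s \subset Y by rewrite /X subUset !cY.
split.
- move=> y /setDP [Yy nXy]; apply/subsetP => z zy.
  rewrite inE (subsetP (cY y Yy)) // andbT; apply: contra nXy.
  rewrite /X !inE => /orP [] zx; apply/orP; [left|right]; exact: rc_disj zy zx.
- move=> g; rewrite !cYE // eY; congr (_ - _)%N.
  have [si|nsi] := boolP (s^-1 \in H :* s).
    rewrite !cardX_same //; congr (_ * _)%N; congr nat_of_bool.
    by rewrite -[s in RHS]invgK dc_inv (dc_rc _ si).
  rewrite !cardX_diff // addnC; congr (_ * _ + _ * _)%N; congr nat_of_bool.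
    by rewrite -dc_inv invgK.
  by rewrite dc_inv.
- move=> g gi; have [sg|nsg] := boolP (s \in dc g).
    by left; rewrite cYE // prem.
  have nsig : s^-1 \notin dc g.
    by apply: contra nsg => sig; rewrite -(invgK s) dc_selfinv.
  have X0 : X s :&: dc g = set0.
    apply/eqP; rewrite -cards_eq0.
    have [si|nsi] := boolP (s^-1 \in H :* s).
      by rewrite cardX_same // (negPf nsg).
    by rewrite cardX_diff // (negPf nsg) (negPf nsig).
  have -> : (Y :\: X s) :&: dc g = Y :&: dc g.
    apply/setP => z; rewrite !in_setI in_setD; case zg: (z \in dc g); last first.
      by rewrite !andbF.
    have : z \notin X s :&: dc g by rewrite X0 in_set0.
    by rewrite in_setI zg andbT => ->.
  exact: dY.
Qed.


Lemma glue (Y S' : {set gT}) s : {in Y, forall y, H :* y \subset Y} ->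
  s \in Y -> s^-1 \in Y -> (s^-1 \in H :* s -> s^-1 = s) ->
  S' \subset Y :\: X s -> S'^-1 = S' ->
  {in Y :\: X s, forall y, #|S' :&: H :* y| = 1%N} ->
  [/\ S' :|: [set s; s^-1] \subset Y, (S' :|: [set s; s^-1])^-1 = S' :|: [set s; s^-1]
   & {in Y, forall y, #|(S' :|: [set s; s^-1]) :&: H :* y| = 1%N}].
Proof.
move=> cY Ys Ysi same sS SV cnt.
have S'X : forall z, z \in S' -> z \notin X s.
  by move=> z /(subsetP sS) /setDP [].
split.
- by rewrite subUset (subset_trans sS (subsetDl _ _)) subUset !sub1set Ys Ysi.
- rewrite invUg SV; congr (_ :|: _); apply/setP => z.
  by rewrite inE !in_set2 !(inv_eq invgK) invgK orbC.
move=> y Yy; have [Xy|nXy] := boolP (y \in X s); last first.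
  have -> : (S' :|: [set s; s^-1]) :&: H :* y = S' :&: H :* y; last first.
    by rewrite cnt // inE nXy.
  apply/setP => z; rewrite !in_setI in_setU.
  case zy: (z \in H :* y); rewrite ?andbF // !andbT.
  suff -> : z \in [set s; s^-1] = false by rewrite orbF.
  apply/negP; rewrite in_set2 => /orP [] /eqP ez; case/negP: nXy; rewrite /X in_setU;
    apply/orP; [left|right]; apply: rc_sym; by rewrite -ez.
have key : forall u v, [set s; s^-1] = [set u; v] -> (v \in H :* u -> v = u) ->
    y \in H :* u -> #|(S' :|: [set s; s^-1]) :&: H :* y| = 1%N.
  move=> u v e uv yu; rewrite (rcoset_eqP yu) e; apply/eqP/cards1P; exists u.
  apply/setP => z; rewrite in_setI in_setU in_set2 in_set1.
  apply/idP/idP.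
    case/andP=> /orP [zS | /orP [] /eqP -> //] zu.
      case/negP: (S'X z zS); rewrite -(rcoset_eqP yu) in zu.
      by move: Xy; rewrite /X !in_setU => /orP [] yx; apply/orP; [left|right]; rewrite -(rcoset_eqP yx).

    by rewrite (uv zu).
  by move/eqP ->; rewrite eqxx orbT rcoset_refl.
move: Xy; rewrite /X in_setU => /orP [ys | ysi].
  by apply: (key s s^-1) => //.
apply: (key s^-1 s) => //; first by rewrite setUC.
by move=> ssi; rewrite same // rc_sym.
Qed.


Lemma two_mul n : (true * n + true * n = 2 * n)%N.
Proof. by rewrite mul1n addnn mul2n. Qed.

Lemma step (Y : {set gT}) g : Inv Y -> g \in Y -> exists s,
  [/\ s \in Y, s^-1 \in Y, (s^-1 \in H :* s -> s^-1 = s) &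
   forall g0, g0^-1 \in dc g0 -> s \in dc g0 ->
      2 * #|H| %| #|Y :&: dc g0| - #|X s :&: dc g0|].
Proof.
move=> [cY eY dY] Yg.
have dvdY : forall g0, #|H| %| #|Y :&: dc g0|.
  move=> g0; apply: dvd_closed => y /setIP [Yy yg0]; apply/subsetP => z zy.
  by rewrite in_setI (subsetP (cY y Yy)) // (dc_rc _ zy).
have H0 : 0 < #|H| := cardG_gt0 H.
have YDge : #|H| <= #|Y :&: dc g|.
  rewrite -(card_rcoset H g) subset_leq_card // subsetI cY //.
  by apply/subsetP => z zg; rewrite (dc_rc _ zg) dc_refl.
have mk : forall g', g' \in dc g^-1 -> exists2 s, s \in H :* g & s^-1 \in H :* g'.
  move=> g' /dcP [a [b [Ha Hb] ->]]; exists (b^-1 * g).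
    by apply/rcosetP; exists b^-1; rewrite ?groupV.
  apply/rcosetP; exists a^-1; rewrite ?groupV //.
  by rewrite invMg invgK !mulgA mulVg mul1g.
have sD : forall s, s \in H :* g -> s \in dc g by move=> s sg; rewrite (dc_rc _ sg) dc_refl.
have [gi|ngi] := boolP (g^-1 \in dc g).
  have Dsi : dc g^-1 = dc g := dc_eq gi.
  have [ev|nev] := boolP (2 * #|H| %| #|Y :&: dc g|).
    have [g' Yg' ng'] : exists2 g', g' \in Y :&: dc g & g' \notin H :* g.
      apply/exists_inP; rewrite -negb_forall_in; apply/negP => /forall_inP sub.
      have : #|Y :&: dc g| <= #|H|.
        by rewrite -(card_rcoset H g); apply/subset_leq_card/subsetP.
      have := dvdn_leq (leq_trans H0 YDge) ev; lia.
    have [Yg'1 g'D] := setIP Yg'.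
    have g'D' : g' \in dc g^-1 by rewrite Dsi.
    have [s sg sig'] := mk g' g'D'.
    have nsi : s^-1 \notin H :* s.
      apply/negP => sis; case/negP: ng'.
      rewrite -(rcoset_eqP sg) -(rcoset_eqP sis) (rcoset_eqP sig').
      exact: rcoset_refl.
    exists s; split.
    - exact: subsetP (cY g Yg) s sg.
    - exact: subsetP (cY g' Yg'1) _ sig'.
    - by move=> /(negP nsi).
    move=> g0 g0i sg0.
    have e0 : dc g0 = dc g by rewrite -(dc_eq sg0) (dc_eq (sD s sg)).
    rewrite e0 cardX_diff // (sD s sg) (dc_selfinv gi (sD s sg)) two_mul.
    exact: dvdn_sub ev (dvdnn _).
  have [|[t /setIP [Yt tD] tt]] := dY g gi; first by rewrite (negPf nev).
  exists t; split; rewrite ?tt //.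
  move=> g0 g0i tg0.
  have e0 : dc g0 = dc g by rewrite -(dc_eq tg0) (dc_eq tD).
  rewrite e0 cardX_same ?tt ?rcoset_refl // tD mul1n.
  have [k ek] := dvdnP (dvdY g); rewrite ek in nev *.
  rewrite -{3}(mul1n #|H|) -mulnBl dvdn_pmul2r //.
  rewrite dvdn_pmul2r // dvdn2 in nev.
  by move: nev; rewrite negbK dvdn2; case: k {ek} => // k; rewrite subSS subn0 /=.
have : 0 < #|Y :&: dc g^-1| by rewrite -eY (leq_trans H0 YDge).
rewrite card_gt0 => /set0Pn [g' /setIP [Yg' g'D]].
have [s sg sig'] := mk g' g'D.
have sDg := sD s sg.
have siD : s^-1 \in dc g^-1 by rewrite dc_inv.
have nsi : s^-1 \notin H :* s.
  apply/negP => sis; case/negP: ngi.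
  have : s^-1 \in dc g by rewrite (dc_rc _ sis).
  move/dc_eq; rewrite (dc_eq siD) => <-; exact: dc_refl.
exists s; split.
- exact: subsetP (cY g Yg) s sg.
- exact: subsetP (cY g' Yg') _ sig'.
- by move=> /(negP nsi).
move=> g0 g0i sg0; case/negP: ngi.
have e0 : dc g0 = dc g by rewrite -(dc_eq sg0) (dc_eq sDg).
rewrite -e0 dc_selfinv // e0 dc_refl //.
Qed.

Lemma build (Y : {set gT}) : Inv Y -> exists S : {set gT},
  [/\ S \subset Y, S^-1 = S & {in Y, forall y, #|S :&: H :* y| = 1%N}].
Proof.
have [n ltY] := ubnP #|Y|; elim: n Y ltY => // n IH Y ltY IY.
have [Y0 | [g Yg]] := set_0Vmem Y.
  exists set0; split; rewrite ?sub0set //; last by move=> y; rewrite Y0 in_set0.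
  by apply/setP => z; rewrite inE !in_set0.
have [s [Ys Ysi same prem]] := step IY Yg.
have IY' := Inv_remove IY Ys Ysi same prem.
have [cY _ _] := IY.
have sXY : X s \subset Y by rewrite /X subUset !cY.
have ltY' : #|Y :\: X s| < n.
  rewrite cardsD (setIidPr sXY).
  have : 0 < #|X s| by rewrite card_gt0; apply/set0Pn; exists s; rewrite inE rcoset_refl.
  move=> pos; have sub := subset_leq_card sXY.
  by rewrite -ltnS (leq_trans _ ltY) // ltnS ltn_subrL pos (leq_trans pos sub).
have [S' [sS SV cnt]] := IH _ ltY' IY'.
by eexists; apply: glue sS SV cnt => //; exact: cY.
Qed.

End DC.


Lemma dc_mem (gT : finGroupType) (H K : {group gT}) g z :
  H \subset K -> z \in dc H g -> (z \in K) = (g \in K).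
Proof.
move=> sHK /dcP [h1 [h2 [H1 H2] ->]].
by rewrite groupMr ?(subsetP sHK _ H2) // groupMl // (subsetP sHK _ H1).
Qed.

Lemma norm_case (gT : finGroupType) (G H : {group gT}) g :
  max_gen_quaternion G H -> g \in G -> g \notin H -> g \in 'N(H) ->
  g^-1 \in dc H g -> exists2 t, t \in (G :\: H) :&: dc H g & t^-1 = t.
Proof.
move=> [sHG gqH maxH] Gg nHg Ng gi.
have [pH ntH oH1 ncH] := GQ_facts gqH.
have g2 : g ^+ 2 \in H.
  rewrite -groupV; case/dcP: gi => h1 [h2 [H1 H2] e].
  have : g^-1 * g^-1 \in H.
    rewrite {1}e -!mulgA groupMl // mulgA.
    have -> : g * h2 * g^-1 = h2 ^ g^-1 by rewrite /conjg invgK mulgA.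
    by rewrite memJ_norm ?groupV.
  by rewrite expgS expg1 invMg.
have rcG : forall t, t \in H :* g -> t \in G :\: H.
  move=> t /rcosetP [h Hh ->].
  by rewrite in_setD (groupMl _ Hh) (groupMl _ (subsetP sHG _ Hh)) nHg Gg.
have [/exists_inP [t tg /eqP tt] | nt] := boolP [exists t in H :* g, t^-1 == t].
  exists t => //; rewrite in_setI rcG //=.
  by rewrite (dc_rc _ tg) dc_refl.
exfalso.
set K := (H <*> <[g]>)%G.
have sHK : H \subset K := joing_subl _ _.
have gK : g \in K := subsetP (joing_subr H <[g]>) g (cycle_id g).
have sKG : K \subset G by rewrite join_subG sHG cycle_subG.
have defK : (K : {set gT}) = H * <[g]> by rewrite /= norm_joinEr // cycle_subG.
have pK : 2.-group K.
  rewrite defK pgroupM pH /= /pgroup -orderE.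
  apply: (@pnat_dvd _ (2 * #|H|)); last by rewrite pnatM pnat_id.
  by rewrite order_dvdn expgM -order_dvdn order_dvdG.
have ntK : K :!=: 1 := subG1_contra sHK ntH.
have eO : 'Ohm_1(K) = 'Ohm_1(H).
  rewrite (OhmE 1 pK) (OhmE 1 pH); congr <<_>>; apply/setP => x.
  rewrite !in_setI; apply/idP/idP; case/andP => Kx x2; rewrite x2 ?andbT; last first.
    exact: subsetP sHK x Kx.
  move: Kx x2; rewrite defK => /mulsgP [h y Hh /cycleP [i ->] ->] x2.
  have ei : g ^+ i = (g ^+ 2) ^+ i./2 * g ^+ (odd i).
    by rewrite -{1}(odd_double_half i) addnC expgD -mul2n expgM.
  rewrite ei mulgA in x2 *.
  have Hh' : h * (g ^+ 2) ^+ i./2 \in H by rewrite groupM // groupX.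
  case oi: (odd i); last by rewrite expg0 mulg1.
  exfalso; case/negP: nt; apply/exists_inP; exists (h * (g ^+ 2) ^+ i./2 * g).
    by apply/rcosetP; exists (h * (g ^+ 2) ^+ i./2).
  move: x2; rewrite inE oi expg1 expn1 expgS expg1 -eq_invg_mul => /eqP ->.
  by rewrite eqxx.
have oK1 : #|'Ohm_1(K)| = 2%N by rewrite eO oH1.
have := introT (prime_Ohm1P pK ntK) oK1.
case/orP => [cK | /andP [_ /eqP /quaternion_classP gqK]].
  by case/negP: ncH; exact: cyclicS sHK cK.
have eKH := maxH K sKG gqK sHK.
by case/negP: nHg; rewrite -eKH.
Qed.

Lemma dc_card (gT : finGroupType) (H : {group gT}) g :
  #|dc H g| = #|H * H :^ g^-1|.
Proof.
rewrite -[RHS](card_rcoset _ g); apply: eq_card => z.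
rewrite mem_rcoset; apply/dcP/mulsgP.
  case=> h1 [h2 [H1 H2] ->]; exists h1 (h2 ^ g^-1) => //.
    by rewrite memJ_conjg.
  by rewrite /conjg invgK !mulgA.
case=> h1 k H1 Kk e; exists h1, (k ^ g); first split => //.
  by move: Kk; rewrite mem_conjg invgK.
by rewrite /conjg !mulgA mulgK -e mulgKV.
Qed.

Lemma Inv_init (gT : finGroupType) (G H : {group gT}) :
  max_gen_quaternion G H -> Inv H (G :\: H).
Proof.
move=> mx; have [sHG gqH maxH] := mx.
have [pH ntH oH1 ncH] := GQ_facts gqH.
split.
- move=> y /setDP [Gy nHy]; apply/subsetP => z /rcosetP [h Hh ->].
  by rewrite in_setD (groupMl _ Hh) (groupMl _ (subsetP sHG _ Hh)) nHy Gy.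
- move=> g; rewrite -card_invg; apply: eq_card => z.
  rewrite mem_invg !in_setI !in_setD !groupV; congr (_ && _).
  by rewrite -dc_inv invgK.
move=> g gi.
have [Gg|nGg] := boolP (g \in G :\: H); last first.
  left; suff -> : (G :\: H) :&: dc H g = set0 by rewrite cards0 dvdn0.
  apply/setP => z; rewrite in_set0 in_setI in_setD; apply/negP.
  case/andP=> /andP [nHz Gz] zg; case/negP: nGg.
  by rewrite in_setD -(dc_mem (subxx _) zg) -(dc_mem sHG zg) nHz Gz.
have [nHg Gg'] := setDP Gg.
have -> : (G :\: H) :&: dc H g = dc H g.
  apply/setIidPr/subsetP => z zg.
  by rewrite in_setD (dc_mem (subxx _) zg) (dc_mem sHG zg) nHg Gg'.
set I := (H :&: H :^ g^-1)%G.
have cd : #|dc H g| = (#|H| * #|H : I|)%N.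
  apply/eqP; rewrite -(eqn_pmul2r (cardG_gt0 I)) dc_card.
  have := mul_cardG H (H :^ g^-1)%G; rewrite cardJg /= => <-.
  by rewrite -mulnA [(#|H : _| * _)%N]mulnC Lagrange ?subsetIl.
have pI : 2.-nat #|H : I| := pnat_dvd (dvdn_indexg H I) pH.
have [k ek] := p_natP pI.
case: k ek => [|k] ek; last first.
  by left; rewrite cd ek expnS mulnCA mulnA dvdn_mulr.
have NH : g \in 'N(H).
  have : #|H : I| == 1%N by rewrite ek.
  rewrite indexg_eq1 subsetI subxx /= => sHJ.
  rewrite -groupV; apply/normP; apply/eqP; rewrite eq_sym eqEcard sHJ cardJg leqnn.
  by [].
have [t /setIP [_ tD] tt] := norm_case mx nHg Gg' NH gi.
by right; exists t.
Qed.

Unset Implicit Arguments.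
Theorem lemma3p3 (gT : finGroupType) (G H : {group gT}) :
  H \subset G -> gen_quaternion H ->
  (subgroup_perfect_code G H <-> max_gen_quaternion G H).
Proof.
move=> sHG gqH; split.
  case=> S [sS SV pc]; split => // K sKG gqK sHK.
  exact: pc_maximal sS SV pc sHK sKG gqH gqK.
move=> mx; have [S [sSY SV cnt]] := build (Inv_init mx).
have SGH : forall s, s \in S -> s \in G /\ s \notin H.
  by move=> s /(subsetP sSY) /setDP [].
exists S; split => //.
  apply/subsetP => s Ss; have [Gs nHs] := SGH s Ss.
  rewrite !inE Gs andbT; apply: contra nHs => /eqP ->; exact: group1.
split => //.
  move=> c1 c2 H1 H2 _; apply/negP => /SGH [_].
  by rewrite groupM ?groupV.
move=> g Gg nHg.
rewrite -(cnt g^-1); last by rewrite in_setD groupV nHg groupV Gg.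
rewrite -[RHS](card_rcoset _ g); apply: eq_card => c.
rewrite mem_rcoset in_setI mem_rcoset invgK mulgKV inE /cayley_adj andbC.
by [].
Qed.
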